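(* Let $n\ge 2$ be an integer, $a>0$, and let $a_0,\dots,a_{n-1}:((-a,a)\setminus\{0\})\times\mathbb{K}\to\mathbb{K}$ be arbitrary functions, where $\mathbb{K}=\mathbb{R}$ or $\mathbb{C}$. Let $f\in C^\infty(-a,a)$ be a solution of $$f^{(n)}(x)+a_{n-1}(x,f(x))f^{(n-1)}(x)+\cdots+a_0(x,f(x))f(x)=0,\qquad x\in(-a,a)\setminus\{0\},$$ such that $$|a_k(x,f(x))|=O\!\left(\frac{1}{|x|^{n-k}}\right)\quad\text{as }x\to 0,\qquad k=0,1,\dots,n-1.$$ Define $$C_n=\max_{0\le k\le n-1}\ \limsup_{x\to 0}\,|x|^{n-k}|a_k(x,f(x))|,\qquad B_n=\sum_{k=0}^{n-1}\frac1{k!}.$$ If $f^{(k)}(0)=0$ for every integer $k$ with $0\le k\le B_nC_n+n-1$, then there exists $\delta>0$ such that $f\equiv 0$ on $[-\delta,\delta]$.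
   Context: The coefficients may be singular at $x=0$; the equation is only required to hold for $x\neq 0$. By the $O$-hypothesis, $C_n$ is a finite nonnegative number. *)

(* Defs.v *)
From Stdlib Require Import Reals Lra List Arith Factorial.
Open Scope R_scope.

(* D k is the k-th derivative of D 0 on the open interval (-a,a):
   D 0 is C^infinity on (-a,a) with derivatives D 1, D 2, ... *)
Definition derivs_on (a : R) (D : nat -> R -> R) : Prop :=
  forall (k : nat) (x : R), -a < x < a -> derivable_pt_lim (D k) x (D (S k) x).

Definition is_limsup0 (g : R -> R) (L : R) : Prop :=
  (forall e, 0 < e -> exists d, 0 < d /\
      forall x, x <> 0 -> Rabs x < d -> g x <= L + e) /\
  (forall e d, 0 < e -> 0 < d -> exists x, x <> 0 /\ Rabs x < d /\ L - e <= g x).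

Definition Rsum_lt (g : nat -> R) (n : nat) : R :=
  fold_right Rplus 0 (map g (seq 0 n)).

Definition Bn (n : nat) : R := Rsum_lt (fun k => / INR (Factorial.fact k)) n.

(* max_{0<=k<=n-1} L k  (the L k are limsups of nonnegative functions,
   so taking the max together with 0 changes nothing) *)
Definition maxlist (L : nat -> R) (n : nat) : R :=
  fold_right Rmax 0 (map L (seq 0 n)).

Definition CC : Type := (R * R)%type.
Definition C0 : CC := (0, 0).
Definition Cadd (z w : CC) : CC := (fst z + fst w, snd z + snd w).
Definition Cmul (z w : CC) : CC :=
  (fst z * fst w - snd z * snd w, fst z * snd w + snd z * fst w).
Definition Cnorm (z : CC) : R := sqrt (fst z * fst z + snd z * snd z).
Definition Csum_lt (g : nat -> CC) (n : nat) : CC :=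
  fold_right Cadd C0 (map g (seq 0 n)).

(* Main.v *)
Require Import Defs.
From Stdlib Require Import Reals Lra List Arith Factorial ZArith Lia.
Open Scope R_scope.

Lemma Rsum_S (g : nat -> R) n : Rsum_lt g (S n) = Rsum_lt g n + g n.
Proof.
  unfold Rsum_lt. rewrite seq_S, map_app, fold_right_app. simpl.
  generalize (map g (seq 0 n)). intro l. induction l; simpl; [ring| rewrite IHl]; ring.
Qed.

Lemma Rsum_Sl (g : nat -> R) n : Rsum_lt g (S n) = g 0%nat + Rsum_lt (fun k => g (S k)) n.
Proof.
  unfold Rsum_lt. simpl. f_equal. rewrite <- seq_shift, map_map. reflexivity.
Qed.

Lemma Rsum_le (f g : nat -> R) n : (forall k, (k < n)%nat -> f k <= g k) -> Rsum_lt f n <= Rsum_lt g n.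
Proof.
  induction n; intros H. unfold Rsum_lt; simpl; lra.
  rewrite !Rsum_S. assert (f n <= g n) by (apply H; lia).
  assert (Rsum_lt f n <= Rsum_lt g n) by (apply IHn; intros; apply H; lia). lra.
Qed.

Lemma Rsum_scal (f : nat -> R) c n : Rsum_lt (fun k => c * f k) n = c * Rsum_lt f n.
Proof. induction n. unfold Rsum_lt; simpl; ring. rewrite !Rsum_S, IHn. ring. Qed.

Lemma Rsum_ext (f g : nat -> R) n : (forall k, (k < n)%nat -> f k = g k) -> Rsum_lt f n = Rsum_lt g n.
Proof.
  induction n; intros H. reflexivity.
  rewrite !Rsum_S, IHn, H; auto; intros; apply H; lia.
Qed.

Lemma Bn_S n : Bn (S n) = Bn n + / INR (fact n).
Proof. unfold Bn. apply Rsum_S. Qed.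

Lemma Bn_pos n : (1 <= n)%nat -> 1 <= Bn n.
Proof.
  induction 1. unfold Bn, Rsum_lt; simpl. lra.
  rewrite Bn_S. assert (0 < / INR (fact m)).
  apply Rinv_0_lt_compat, lt_0_INR, lt_O_fact. lra.
Qed.

Lemma maxlist_ge L n k : (k < n)%nat -> L k <= maxlist L n.
Proof.
  unfold maxlist. intros H. assert (Hin : In k (seq 0 n)) by (apply in_seq; lia).
  generalize Hin. generalize (seq 0 n). intro l. induction l; simpl. tauto.
  intros [->|Hi]. apply Rmax_l. eapply Rle_trans. apply IHl; auto. apply Rmax_r.
Qed.

Lemma maxlist_nonneg L n : 0 <= maxlist L n.
Proof.
  unfold maxlist. generalize (seq 0 n). intro l. induction l; simpl. lra.
  eapply Rle_trans. apply IHl. apply Rmax_r.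
Qed.

Lemma Cnorm_nonneg z : 0 <= Cnorm z.
Proof. unfold Cnorm. apply sqrt_pos. Qed.

Lemma Cnorm_mul z w : Cnorm (Cmul z w) = Cnorm z * Cnorm w.
Proof.
  destruct z as [a b], w as [c d]. unfold Cnorm, Cmul; simpl.
  rewrite <- sqrt_mult by nra. f_equal. ring.
Qed.

Lemma Cnorm_add z w : Cnorm (Cadd z w) <= Cnorm z + Cnorm w.
Proof.
  destruct z as [a b], w as [c d]. unfold Cnorm, Cadd; simpl.
  set (X := sqrt (a*a+b*b)). set (Y := sqrt (c*c+d*d)).
  assert (HX : X*X = a*a+b*b) by (apply sqrt_sqrt; nra).
  assert (HY : Y*Y = c*c+d*d) by (apply sqrt_sqrt; nra).
  assert (X0 : 0 <= X) by apply sqrt_pos. assert (Y0 : 0 <= Y) by apply sqrt_pos.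
  assert (CS : a*c+b*d <= X*Y).
  { assert ((a*c+b*d)*(a*c+b*d) <= (X*Y)*(X*Y)).
    { replace ((X*Y)*(X*Y)) with ((X*X)*(Y*Y)) by ring. rewrite HX, HY. assert (0 <= (a*d-b*c)*(a*d-b*c)) by (pose proof (Rle_0_sqr (a*d-b*c)) as Hq; unfold Rsqr in Hq; exact Hq).
      replace ((a*a+b*b)*(c*c+d*d)) with ((a*c+b*d)*(a*c+b*d) + (a*d-b*c)*(a*d-b*c)) by ring. lra. }
    assert (0 <= X*Y) by (apply Rmult_le_pos; auto).
    destruct (Rle_dec (a*c+b*d) (X*Y)) as [?|Hn]; auto. exfalso.
    apply Rnot_le_lt in Hn.
    assert ((X*Y)*(X*Y) < (a*c+b*d)*(a*c+b*d)) by (apply Rmult_le_0_lt_compat; lra). lra. }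
  rewrite <- (sqrt_Rsqr (X+Y)) by lra. apply sqrt_le_1_alt. unfold Rsqr.
  replace ((X+Y)*(X+Y)) with (X*X + Y*Y + 2*(X*Y)) by ring. rewrite HX, HY. nra.
Qed.

Lemma Cnorm_C0 : Cnorm C0 = 0.
Proof. unfold Cnorm, C0; simpl. replace (0*0+0*0) with 0 by ring. apply sqrt_0. Qed.

Lemma Csum_norm (g : nat -> CC) n : Cnorm (Csum_lt g n) <= Rsum_lt (fun k => Cnorm (g k)) n.
Proof.
  unfold Csum_lt, Rsum_lt. generalize (seq 0 n). intro l. induction l; simpl.
  rewrite Cnorm_C0; lra. eapply Rle_trans. apply Cnorm_add. lra.
Qed.

Lemma Csum_fst (g : nat -> CC) n : fst (Csum_lt g n) = Rsum_lt (fun k => fst (g k)) n.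
Proof.
  unfold Csum_lt, Rsum_lt. generalize (seq 0 n). intro l. induction l; simpl. auto.
  rewrite IHl. auto.
Qed.
Lemma Csum_snd (g : nat -> CC) n : snd (Csum_lt g n) = Rsum_lt (fun k => snd (g k)) n.
Proof.
  unfold Csum_lt, Rsum_lt. generalize (seq 0 n). intro l. induction l; simpl. auto.
  rewrite IHl. auto.
Qed.

Lemma Cnorm_opp a b : Cnorm (-a, -b) = Cnorm (a, b).
Proof. unfold Cnorm; simpl. f_equal. ring. Qed.

Lemma Cnorm_real a : Cnorm (a, 0) = Rabs a.
Proof. unfold Cnorm; simpl. replace (a*a+0*0) with (Rsqr a) by (unfold Rsqr; ring). apply sqrt_Rsqr_abs. Qed.

Lemma dpl_plus f g x a b : derivable_pt_lim f x a -> derivable_pt_lim g x b ->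
  derivable_pt_lim (fun t => f t + g t) x (a + b).
Proof. intros. exact (derivable_pt_lim_plus f g x a b H H0). Qed.
Lemma dpl_minus f g x a b : derivable_pt_lim f x a -> derivable_pt_lim g x b ->
  derivable_pt_lim (fun t => f t - g t) x (a - b).
Proof. intros. exact (derivable_pt_lim_minus f g x a b H H0). Qed.
Lemma dpl_scal f c x a : derivable_pt_lim f x a ->
  derivable_pt_lim (fun t => c * f t) x (c * a).
Proof. intros. exact (derivable_pt_lim_scal f c x a H). Qed.
Lemma dpl_ext f g x a b : (forall t, f t = g t) -> a = b -> derivable_pt_lim f x a -> derivable_pt_lim g x b.
Proof. intros H -> D eps He. destruct (D eps He) as [d Hd]. exists d. intros h Hh Hhd.
  rewrite <- !H. apply Hd; auto. Qed.

Lemma CS_bound al be a b : al*al + be*be = 1 -> al*a + be*b <= Cnorm (a, b).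
Proof.
  intros H. unfold Cnorm; simpl.
  destruct (Rle_dec (al*a+be*b) 0). pose proof (sqrt_pos (a*a+b*b)); lra.
  apply Rnot_le_lt in n.
  rewrite <- (sqrt_Rsqr (al*a+be*b)) by lra. apply sqrt_le_1_alt. unfold Rsqr.
  assert (0 <= (al*b-be*a)*(al*b-be*a)) by (pose proof (Rle_0_sqr (al*b-be*a)) as Hq; unfold Rsqr in Hq; exact Hq).
  replace (a*a+b*b) with ((al*al+be*be)*(a*a+b*b)) by (rewrite H; ring).
  replace ((al*al+be*be)*(a*a+b*b)) with ((al*a+be*b)*(al*a+be*b) + (al*b-be*a)*(al*b-be*a)) by ring.
  lra.
Qed.

Lemma integ (u v u' v' : R -> R) x K q : 0 < x ->
  (forall t, 0 <= t <= x -> derivable_pt_lim u t (u' t)) ->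
  (forall t, 0 <= t <= x -> derivable_pt_lim v t (v' t)) ->
  u 0 = 0 -> v 0 = 0 ->
  (forall c, 0 < c < x -> Cnorm (u' c, v' c) <= K * c ^ q) ->
  Cnorm (u x, v x) <= K * x ^ (S q) / INR (S q).
Proof.
  intros Hx Du Dv u0 v0 Hb.
  assert (HK : 0 <= K).
  { assert (H1 := Hb (x/2) ltac:(lra)). pose proof (Cnorm_nonneg (u' (x/2), v' (x/2))).
    assert (0 < (x/2)^q) by (apply pow_lt; lra).
    destruct (Rle_dec 0 K); auto. nra. }
  assert (HQ : 0 < INR (S q)) by (apply lt_0_INR; lia).
  assert (HR : 0 <= K * x ^ S q / INR (S q)).
  { unfold Rdiv. apply Rmult_le_pos. apply Rmult_le_pos; auto. apply pow_le; lra.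
    left; apply Rinv_0_lt_compat; auto. }
  set (N := Cnorm (u x, v x)).
  assert (N0 : 0 <= N) by apply Cnorm_nonneg.
  destruct (Req_dec N 0) as [E|NE]. rewrite E; auto.
  assert (NP : 0 < N) by lra.
  assert (NN : N * N = u x * u x + v x * v x) by (apply sqrt_sqrt; nra).
  set (al := u x / N). set (be := v x / N).
  assert (Hab : al*al+be*be = 1).
  { unfold al, be. replace (u x / N * (u x / N) + v x / N * (v x / N)) with ((u x * u x + v x * v x) / (N*N)) by (field; lra). rewrite <- NN. field. lra. }
  set (phi := fun t => al * u t + be * v t - K * t ^ S q / INR (S q)).
  set (phi' := fun t => al * u' t + be * v' t - K * t ^ q).
  destruct (MVT_cor2 phi phi' 0 x Hx) as [c [Hc Hcr]].
  { intros c Hc. unfold phi, phi'. apply dpl_minus. apply dpl_plus; apply dpl_scal; auto.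
    apply (dpl_ext (fun t => (K / INR (S q)) * t ^ S q) _ c (K / INR (S q) * (INR (S q) * c ^ pred (S q)))). intros; field; lra.
    simpl pred. field; lra. apply dpl_scal. apply derivable_pt_lim_pow. }
  assert (phi x = N - K * x ^ S q / INR (S q)).
  { unfold phi, al, be. replace (u x / N * u x + v x / N * v x) with ((u x * u x + v x * v x)/N) by (field; lra).
    rewrite <- NN. field; lra. }
  assert (phi 0 = 0). { unfold phi. rewrite u0, v0, pow_i by lia. unfold Rdiv; ring. }
  assert (phi' c <= 0).
  { unfold phi'. pose proof (CS_bound al be (u' c) (v' c) Hab). pose proof (Hb c Hcr). lra. }
  assert (phi' c * (x - 0) <= 0) by nra.
  fold N. lra.
Qed.

Fixpoint cc (p j : nat) : R := match j with O => 1 | S j' => cc p j' / INR (S (p + j')) end.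

Lemma cc_pos p j : 0 < cc p j.
Proof. induction j; cbn [cc]. lra. apply Rdiv_lt_0_compat; auto. apply lt_0_INR; lia. Qed.

Lemma cc_bound p j : cc p (S j) * (INR (S p) * INR (fact j)) <= 1.
Proof.
  induction j.
  - cbn [cc]. change (fact 0) with 1%nat. rewrite Nat.add_0_r. change (INR 1) with 1.
    assert (0 < INR (S p)) by (apply lt_0_INR; lia). right; field; lra.
  - change (cc p (S (S j))) with (cc p (S j) / INR (S (p + S j))).
    change (fact (S j)) with (S j * fact j)%nat. rewrite mult_INR.
    assert (0 < INR (S (p + S j))) by (apply lt_0_INR; lia).
    assert (INR (S j) <= INR (S (p + S j))) by (apply le_INR; lia).
    assert (0 <= INR (S j)) by apply pos_INR.
    set (X := cc p (S j) * (INR (S p) * INR (fact j))) in *.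
    assert (0 <= X).
    { unfold X. pose proof (cc_pos p (S j)). assert (0 < INR (fact j)) by (apply lt_0_INR, lt_O_fact).
      assert (0 < INR (S p)) by (apply lt_0_INR; lia). apply Rmult_le_pos; [lra|]. nra. }
    replace (cc p (S j) / INR (S (p + S j)) * (INR (S p) * (INR (S j) * INR (fact j))))
      with (X * (INR (S j) / INR (S (p + S j)))) by (unfold X; field; lra).
    assert (INR (S j) / INR (S (p + S j)) <= 1).
    { apply (Rmult_le_reg_r (INR (S (p + S j)))); auto. unfold Rdiv. rewrite Rmult_assoc, Rinv_l; lra. }
    assert (0 <= INR (S j) / INR (S (p + S j))) by (unfold Rdiv; apply Rmult_le_pos; [lra|left; apply Rinv_0_lt_compat; lra]).
    nra.
Qed.

Lemma T_bound p n : Rsum_lt (fun k => cc p (n - k)) n * INR (S p) <= Bn n.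
Proof.
  induction n.
  - unfold Bn, Rsum_lt; cbn [seq map fold_right]. rewrite Rmult_0_l; lra.
  - rewrite Rsum_Sl, Bn_S. simpl (S n - 0)%nat.
    assert (E : Rsum_lt (fun k => cc p (S n - S k)) n = Rsum_lt (fun k => cc p (n - k)) n) by reflexivity.
    rewrite E. pose proof (cc_bound p n).
    assert (0 < INR (fact n)) by (apply lt_0_INR, lt_O_fact).
    assert (0 < INR (S p)) by (apply lt_0_INR; lia).
    assert (cc p (S n) * INR (S p) <= / INR (fact n)).
    { apply (Rmult_le_reg_r (INR (fact n))); auto. rewrite Rinv_l by lra. lra. }
    lra.
Qed.

Lemma zero_lim a b th : 0 <= th < 1 -> 0 <= a -> (forall i, a <= th ^ i * b) -> a = 0.
Proof.
  intros Hth Ha H. destruct (Req_dec a 0); auto. exfalso.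
  assert (Hy : 0 < a / (Rabs b + 1)) by (apply Rdiv_lt_0_compat; [lra| pose proof (Rabs_pos b); lra]).
  destruct (pow_lt_1_zero th ltac:(rewrite Rabs_right; lra) _ Hy) as [N HN].
  specialize (HN N (le_n _)). specialize (H N).
  assert (th ^ N * b <= Rabs (th ^ N) * Rabs b) by (rewrite <- Rabs_mult; apply Rle_abs).
  assert (Rabs (th ^ N) * Rabs b <= a / (Rabs b + 1) * Rabs b).
  { apply Rmult_le_compat_r. apply Rabs_pos. lra. }
  assert (a / (Rabs b + 1) * Rabs b < a).
  { pose proof (Rabs_pos b). apply (Rmult_lt_reg_r (Rabs b + 1)). lra.
    field_simplify; lra. }
  lra.
Qed.

Section Core.
Variables (n p : nat) (x K : R) (G : nat -> R -> R).
Hypotheses (Hn : (1 <= n)%nat) (Hx : 0 < x) (HK : 0 <= K) (HG : forall k s, 0 <= G k s)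
  (Hint : forall k, (k < n + p)%nat -> forall s, 0 < s <= x -> forall Kb q,
    (forall c, 0 < c < s -> G (S k) c <= Kb * c ^ q) -> G k s <= Kb * s ^ (S q) / INR (S q))
  (Hbd : exists M, forall s, 0 < s <= x -> G (n + p)%nat s <= M)
  (Hode : forall s, 0 < s <= x -> G n s <= Rsum_lt (fun k => K / s ^ (n - k) * G k s) n)
  (Hth : K * Bn n < INR (S p)).

Lemma init_bound : forall j, (j <= p)%nat -> exists S0, forall s, 0 < s <= x -> G (n + p - j)%nat s <= S0 * s ^ j.
Proof.
  induction j; intros Hj.
  - destruct Hbd as [M HM]. exists M. intros s Hs. rewrite Nat.sub_0_r. simpl. rewrite Rmult_1_r. auto.
  - destruct (IHj ltac:(lia)) as [S0 HS]. exists (S0 / INR (S j)). intros s Hs.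
    replace (S0 / INR (S j) * s ^ S j) with (S0 * s ^ S j / INR (S j)) by (unfold Rdiv; ring).
    apply Hint. lia. auto. intros c Hc.
    replace (S (n + p - S j)) with (n + p - j)%nat by lia. apply HS. lra.
Qed.

Lemma descent S0 : (forall s, 0 < s <= x -> G n s <= S0 * s ^ p) ->
  forall j, (j <= n)%nat -> forall s, 0 < s <= x -> G (n - j)%nat s <= S0 * cc p j * s ^ (p + j).
Proof.
  intros H0. induction j; intros Hj s Hs.
  - rewrite Nat.sub_0_r, Nat.add_0_r. simpl. rewrite Rmult_1_r. auto.
  - replace (S0 * cc p (S j) * s ^ (p + S j)) with (S0 * cc p j * s ^ S (p + j) / INR (S (p + j)))
      by (rewrite Nat.add_succ_r; cbn [cc]; unfold Rdiv; ring).
    apply Hint. lia. auto. intros c Hc.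
    replace (S (n - S j)) with (n - j)%nat by lia. apply IHj. lia. lra.
Qed.

Definition T := Rsum_lt (fun k => cc p (n - k)) n.

Lemma contract S0 : (forall s, 0 < s <= x -> G n s <= S0 * s ^ p) ->
  forall s, 0 < s <= x -> G n s <= (K * T) * S0 * s ^ p.
Proof.
  intros H0 s Hs. eapply Rle_trans. apply Hode; auto.
  eapply Rle_trans. apply (Rsum_le _ (fun k => (K * S0 * s ^ p) * cc p (n - k))).
  - intros k Hk. pose proof (descent S0 H0 (n - k) ltac:(lia) s Hs) as D.
    replace (n - (n - k))%nat with k in D by lia.
    assert (0 < s ^ (n - k)) by (apply pow_lt; lra).
    replace (K * S0 * s ^ p * cc p (n - k)) with (K / s ^ (n - k) * (S0 * cc p (n - k) * s ^ (p + (n - k)))).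
    apply Rmult_le_compat_l; auto. unfold Rdiv; apply Rmult_le_pos; [lra|left; apply Rinv_0_lt_compat; lra].
    rewrite pow_add. field. lra.
  - rewrite Rsum_scal. unfold T. right; ring.
Qed.

Lemma core : forall s, 0 < s <= x -> G 0%nat s = 0.
Proof.
  destruct (init_bound p (le_n _)) as [S0 HS0].
  replace (n + p - p)%nat with n in HS0 by lia.
  assert (S00 : 0 <= S0).
  { pose proof (HS0 x ltac:(lra)). pose proof (HG n x). assert (0 < x ^ p) by (apply pow_lt; lra).
    destruct (Rle_dec 0 S0); auto. nra. }
  assert (HT0 : 0 <= T).
  { unfold T. eapply Rle_trans with (Rsum_lt (fun _ => 0) n).
    right. clear. induction n. reflexivity. rewrite Rsum_S, <- IHn0. ring.
    apply Rsum_le. intros. left. apply cc_pos. }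
  assert (Hth1 : K * T < 1).
  { pose proof (T_bound p n). fold T in H. assert (0 < INR (S p)) by (apply lt_0_INR; lia).
    apply (Rmult_lt_reg_r (INR (S p))); auto. nra. }
  assert (It : forall i s, 0 < s <= x -> G n s <= (K * T) ^ i * S0 * s ^ p).
  { induction i; intros s Hs. simpl. rewrite Rmult_1_l. auto.
    replace ((K * T) ^ S i * S0) with ((K * T) * ((K * T) ^ i * S0)) by (simpl; ring).
    apply (contract ((K * T) ^ i * S0)); auto. }
  intros s Hs.
  apply (zero_lim _ (S0 * cc p n * s ^ (p + n)) (K * T)). split; [apply Rmult_le_pos; auto|auto]. auto.
  intros i. pose proof (descent _ (It i) n (le_n _) s Hs). rewrite Nat.sub_diag in H.
  eapply Rle_trans. apply H. right; ring.
Qed.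
End Core.

Lemma unif (P : nat -> R -> Prop) N :
  (forall k d d', 0 < d' <= d -> P k d -> P k d') ->
  (forall k, (k < N)%nat -> exists d, 0 < d /\ P k d) ->
  exists d, 0 < d /\ forall k, (k < N)%nat -> P k d.
Proof.
  intros Hm. induction N; intros H.
  - exists 1. split. lra. intros; lia.
  - destruct IHN as [d1 [H1 H1']]. intros; apply H; lia.
    destruct (H N ltac:(lia)) as [d2 [H2 H2']].
    exists (Rmin d1 d2). split. apply Rmin_glb_lt; auto.
    intros k Hk. destruct (Nat.eq_dec k N) as [->|].
    + apply (Hm N d2). split. apply Rmin_glb_lt; auto. apply Rmin_r. auto.
    + apply (Hm k d1). split. apply Rmin_glb_lt; auto. apply Rmin_l. apply H1'; lia.
Qed.

Lemma Cnorm_le_abs a b : Cnorm (a, b) <= Rabs a + Rabs b.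
Proof.
  replace (a, b) with (Cadd (a, 0) (0, b)) by (unfold Cadd; simpl; f_equal; ring).
  eapply Rle_trans. apply Cnorm_add. rewrite Cnorm_real.
  replace (Cnorm (0, b)) with (Rabs b). lra.
  rewrite <- Cnorm_real. unfold Cnorm; simpl. f_equal; ring.
Qed.

Lemma Cnorm_zero a b : Cnorm (a, b) = 0 -> a = 0 /\ b = 0.
Proof.
  unfold Cnorm; simpl. intros H. apply sqrt_eq_0 in H; [|nra]. split; nra.
Qed.

Lemma sign_sq k : (-1) ^ k * (-1) ^ k = 1.
Proof. induction k; simpl. ring. replace (-1 * (-1) ^ k * (-1 * (-1) ^ k)) with ((-1) ^ k * (-1) ^ k) by ring. auto. Qed.

Lemma Cnorm_sign k a b : Cnorm ((-1) ^ k * a, (-1) ^ k * b) = Cnorm (a, b).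
Proof.
  unfold Cnorm; simpl. f_equal.
  replace ((-1) ^ k * a * ((-1) ^ k * a) + (-1) ^ k * b * ((-1) ^ k * b))
    with (((-1) ^ k * (-1) ^ k) * (a * a + b * b)) by ring. rewrite sign_sq. ring.
Qed.

Lemma dpl_neg f l t : derivable_pt_lim f (- t) l -> derivable_pt_lim (fun s => f (- s)) t (- l).
Proof.
  intros H.
  assert (H1 : derivable_pt_lim (fun s => - s) t (-1)).
  { apply (dpl_ext (- id)%F _ t (- 1)). intros; reflexivity. reflexivity. apply derivable_pt_lim_opp, derivable_pt_lim_id. }
  pose proof (derivable_pt_lim_comp (fun s => - s) f t (-1) l H1 H).
  apply (dpl_ext (comp f (fun s => - s)) _ t (l * -1)). intros; reflexivity. ring. auto.
Qed.

Lemma bound_on f f' lo hi : lo <= hi -> (forall t, lo <= t <= hi -> derivable_pt_lim f t (f' t)) ->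
  exists M, forall t, lo <= t <= hi -> Rabs (f t) <= M.
Proof.
  intros Hle Hd. destruct (continuity_ab_maj (comp Rabs f) lo hi Hle) as [Mx [HM _]].
  - intros c Hc. apply continuity_pt_comp. apply derivable_continuous_pt. exact (exist _ (f' c) (Hd c Hc)).
    apply Rcontinuity_abs.
  - exists (Rabs (f Mx)). intros t Ht. apply (HM t Ht).
Qed.

Theorem complex_case :
  (forall (n : nat) (a : R) (A : nat -> R -> CC -> CC)
          (Du Dv : nat -> R -> R) (L : nat -> R),
     (2 <= n)%nat -> 0 < a ->
     derivs_on a Du -> derivs_on a Dv ->
     (forall x, -a < x < a -> x <> 0 ->
        Cadd (Du n x, Dv n x)
             (Csum_lt (fun k => Cmul (A k x (Du 0%nat x, Dv 0%nat x)) (Du k x, Dv k x)) n)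
        = C0) ->
     (forall k, (k < n)%nat -> exists M d, 0 < d /\
        forall x, x <> 0 -> Rabs x < d ->
          Cnorm (A k x (Du 0%nat x, Dv 0%nat x)) <= M / (Rabs x) ^ (n - k)) ->
     (forall k, (k < n)%nat ->
        is_limsup0 (fun x => Rabs x ^ (n - k) * Cnorm (A k x (Du 0%nat x, Dv 0%nat x))) (L k)) ->
     (forall k : nat, INR k <= Bn n * maxlist L n + INR n - 1 ->
        Du k 0 = 0 /\ Dv k 0 = 0) ->
     exists delta, 0 < delta < a /\
       forall x, -delta <= x <= delta -> Du 0%nat x = 0 /\ Dv 0%nat x = 0).
Proof.
  intros n a A Du Dv L Hn Ha DU DV Hode _ Hls Hz.
  set (Lm := maxlist L n). set (B := Bn n).
  assert (HB : 1 <= B) by (apply Bn_pos; lia).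
  assert (HLm : 0 <= Lm) by apply maxlist_nonneg.
  set (r := B * Lm + INR n - 1).
  destruct (archimed r) as [Hr1 Hr2].
  assert (Hn1 : 1 <= INR n - 1) by (replace 1 with (INR 2 - 1) at 1 by (simpl; ring); apply Rplus_le_compat_r, le_INR; auto).
  assert (HBL : 0 <= B*Lm) by (apply Rmult_le_pos; lra).
  assert (Hr0 : 0 < r) by (unfold r; lra).
  assert (Hz0 : (0 <= up r)%Z) by (apply le_IZR; lra).
  set (m := Z.to_nat (up r)).
  assert (Hm : INR m = IZR (up r)) by (unfold m; rewrite INR_IZR_INZ, Z2Nat.id; auto).
  assert (HZ : forall k, (k < m)%nat -> Du k 0 = 0 /\ Dv k 0 = 0).
  { intros k Hk. apply Hz. fold Lm B. fold r. assert (Hk' : INR (S k) <= INR m) by (apply le_INR; lia).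
    rewrite S_INR in Hk'. lra. }
  assert (Hnm : (n <= m)%nat).
  { destruct (le_lt_dec n m); auto. assert (Hk' : INR (S m) <= INR n) by (apply le_INR; lia).
    rewrite S_INR in Hk'. assert (r = B*Lm + INR n - 1) by reflexivity. lra. }
  set (p := (m - n)%nat).
  assert (Hp : INR (S p) = INR m - INR n + 1).
  { rewrite S_INR. unfold p. rewrite minus_INR; auto. }
  assert (Hgap : B * Lm < INR (S p)) by (assert (r = B*Lm + INR n - 1) by reflexivity; lra).
  set (eps := (INR (S p) - B * Lm) / (2 * B)).
  assert (Heps : 0 < eps) by (unfold eps; apply Rdiv_lt_0_compat; lra).
  set (K := Lm + eps).
  assert (HK : 0 <= K) by (unfold K; lra).
  assert (HKB : K * B < INR (S p)).
  { unfold K, eps. replace ((Lm + (INR (S p) - B * Lm) / (2 * B)) * B) with (B * Lm + (INR (S p) - B * Lm) / 2) by (field; lra). lra. }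
  destruct (unif (fun k d => forall y, y <> 0 -> Rabs y < d ->
       Rabs y ^ (n - k) * Cnorm (A k y (Du 0%nat y, Dv 0%nat y)) <= L k + eps) n) as [d1 [Hd1 Hd1']].
  { intros k d d' Hdd H y Hy Hyd. apply H; auto. lra. }
  { intros k Hk. destruct (Hls k Hk) as [H1 _]. apply (H1 eps Heps). }
  set (R0 := Rmin d1 a).
  assert (HR0 : 0 < R0) by (apply Rmin_glb_lt; auto).
  assert (HR0a : R0 <= a) by apply Rmin_r.
  assert (Hode' : forall y, y <> 0 -> Rabs y < R0 ->
     Cnorm (Du n y, Dv n y) <= Rsum_lt (fun k => K / Rabs y ^ (n - k) * Cnorm (Du k y, Dv k y)) n).
  { intros y Hy Hyr.
    assert (Hya : -a < y < a) by (destruct (Rabs_def2 y R0 Hyr); lra).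
    pose proof (Hode y Hya Hy) as E.
    set (w := Csum_lt (fun k => Cmul (A k y (Du 0%nat y, Dv 0%nat y)) (Du k y, Dv k y)) n) in E.
    unfold Cadd, C0 in E. simpl in E. injection E as E1 E2.
    replace (Du n y, Dv n y) with (- fst w, - snd w) by (f_equal; lra).
    rewrite Cnorm_opp, <- surjective_pairing. unfold w.
    eapply Rle_trans. apply Csum_norm. apply Rsum_le. intros k Hk.
    rewrite Cnorm_mul. apply Rmult_le_compat_r. apply Cnorm_nonneg.
    assert (Hpy : 0 < Rabs y ^ (n - k)) by (apply pow_lt, Rabs_pos_lt; auto).
    pose proof (Hd1' k Hk y Hy ltac:(assert (R0 <= d1) by apply Rmin_l; lra)).
    pose proof (maxlist_ge L n k Hk). fold Lm in H0.
    apply (Rmult_le_reg_l (Rabs y ^ (n - k))); auto.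
    replace (Rabs y ^ (n - k) * (K / Rabs y ^ (n - k))) with K by (field; lra).
    unfold K; lra. }
  set (delta := R0 / 2).
  assert (Hmnp : (n + p)%nat = m) by (unfold p; lia).
  destruct (bound_on (Du m) (Du (S m)) (-delta) delta ltac:(unfold delta; lra)) as [Mu HMu].
  { intros t Ht. apply DU. unfold delta in Ht; lra. }
  destruct (bound_on (Dv m) (Dv (S m)) (-delta) delta ltac:(unfold delta; lra)) as [Mv HMv].
  { intros t Ht. apply DV. unfold delta in Ht; lra. }
  assert (Hdel : 0 < delta) by (unfold delta; lra).
  assert (Pos : forall s, 0 < s <= delta -> Cnorm (Du 0%nat s, Dv 0%nat s) = 0).
  { apply (core n p delta K (fun k s => Cnorm (Du k s, Dv k s))); auto; try lia.
    - intros; apply Cnorm_nonneg.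
    - intros k Hk s Hs Kb q Hb. apply (integ (Du k) (Dv k) (Du (S k)) (Dv (S k))); try tauto.
      all: try (intros t Ht; first [apply DU | apply DV]; unfold delta in Hs; lra).
      all: try (intros c Hc; apply Hb; auto).
      all: try apply (proj1 (HZ k ltac:(lia))).
      all: try apply (proj2 (HZ k ltac:(lia))).
    - exists (Mu + Mv). intros s Hs. rewrite Hmnp. eapply Rle_trans. apply Cnorm_le_abs.
      pose proof (HMu s ltac:(lra)). pose proof (HMv s ltac:(lra)). lra.
    - intros s Hs. eapply Rle_trans. apply Hode'. lra. rewrite Rabs_right; unfold delta in Hs; lra.
      rewrite Rabs_right by lra. right; reflexivity. }
  assert (Neg : forall s, 0 < s <= delta -> Cnorm (Du 0%nat (- s), Dv 0%nat (- s)) = 0).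
  { apply (core n p delta K (fun k s => Cnorm (Du k (- s), Dv k (- s)))); auto; try lia.
    - intros; apply Cnorm_nonneg.
    - intros k Hk s Hs Kb q Hb. rewrite <- (Cnorm_sign k).
      apply (integ (fun t => (-1) ^ k * Du k (- t)) (fun t => (-1) ^ k * Dv k (- t))
                   (fun t => (-1) ^ (S k) * Du (S k) (- t)) (fun t => (-1) ^ (S k) * Dv (S k) (- t))); try tauto.
      + intros t Ht. apply (dpl_ext (fun t => (-1) ^ k * Du k (- t)) _ t ((-1) ^ k * (- Du (S k) (- t)))).
        reflexivity. simpl; ring. apply dpl_scal, dpl_neg, DU. unfold delta in Hs; lra.
      + intros t Ht. apply (dpl_ext (fun t => (-1) ^ k * Dv k (- t)) _ t ((-1) ^ k * (- Dv (S k) (- t)))).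
        reflexivity. simpl; ring. apply dpl_scal, dpl_neg, DV. unfold delta in Hs; lra.
      + rewrite Ropp_0, (proj1 (HZ k ltac:(lia))). ring.
      + rewrite Ropp_0, (proj2 (HZ k ltac:(lia))). ring.
      + intros c Hc. rewrite Cnorm_sign. apply Hb; auto.
    - exists (Mu + Mv). intros s Hs. rewrite Hmnp. eapply Rle_trans. apply Cnorm_le_abs.
      pose proof (HMu (- s) ltac:(lra)). pose proof (HMv (- s) ltac:(lra)). lra.
    - intros s Hs. eapply Rle_trans. apply Hode'. lra. rewrite Rabs_Ropp, Rabs_right; unfold delta in Hs; lra.
      rewrite Rabs_Ropp, Rabs_right by lra. right; reflexivity. }
  exists delta. split. split; auto. unfold delta; lra.
  intros x Hx. destruct (Rtotal_order x 0) as [Hl|[He|Hg]].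
  - apply Cnorm_zero. replace x with (- (- x)) by ring. apply Neg. lra.
  - subst. apply HZ. lia.
  - apply Cnorm_zero. apply Pos. lra.
Qed.

Lemma limsup_ext f g L : (forall x, f x = g x) -> is_limsup0 f L -> is_limsup0 g L.
Proof.
  intros E [H1 H2]. split.
  - intros e He. destruct (H1 e He) as [d [Hd H]]. exists d. split; auto. intros. rewrite <- E. auto.
  - intros e d He Hd. destruct (H2 e d He Hd) as [y Hy]. exists y. rewrite <- E. auto.
Qed.

Theorem real_case :
  (forall (n : nat) (a : R) (A : nat -> R -> R -> R) (D : nat -> R -> R)
          (L : nat -> R),
     (2 <= n)%nat -> 0 < a ->
     derivs_on a D ->
     (forall x, -a < x < a -> x <> 0 ->
        D n x + Rsum_lt (fun k => A k x (D 0%nat x) * D k x) n = 0) ->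
     (forall k, (k < n)%nat -> exists M d, 0 < d /\
        forall x, x <> 0 -> Rabs x < d ->
          Rabs (A k x (D 0%nat x)) <= M / (Rabs x) ^ (n - k)) ->
     (forall k, (k < n)%nat ->
        is_limsup0 (fun x => Rabs x ^ (n - k) * Rabs (A k x (D 0%nat x))) (L k)) ->
     (forall k : nat, INR k <= Bn n * maxlist L n + INR n - 1 -> D k 0 = 0) ->
     exists delta, 0 < delta < a /\
       forall x, -delta <= x <= delta -> D 0%nat x = 0).
Proof.
  intros n a A D L Hn Ha HD Hode HO Hls Hz.
  destruct (complex_case n a (fun k x y => (A k x (fst y), 0)) D (fun _ _ => 0) L Hn Ha HD)
    as [delta [Hd H]].
  - intros k x _. exact (derivable_pt_lim_const 0 x).
  - intros x Hx Hx0. simpl.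
    rewrite (surjective_pairing (Csum_lt _ n)), Csum_fst, Csum_snd. unfold Cadd, C0, Cmul; simpl.
    f_equal.
    + etransitivity; [|apply (Hode x Hx Hx0)]. f_equal. apply Rsum_ext. intros; simpl; ring.
    + assert (E : Rsum_lt (fun k => A k x (D 0%nat x) * 0 + 0 * D k x) n = Rsum_lt (fun _ => 0) n)
        by (apply Rsum_ext; intros; ring).
      rewrite E. assert (Z : forall m, Rsum_lt (fun _ => 0) m = 0).
      { induction m. reflexivity. rewrite Rsum_S, IHm. ring. }
      rewrite Z. ring.
  - intros k Hk. destruct (HO k Hk) as [M [d [Hd H]]]. exists M, d. split; auto.
    intros x Hx Hxd. simpl. rewrite Cnorm_real. auto.
  - intros k Hk. eapply limsup_ext; [|apply (Hls k Hk)]. intros x. simpl. rewrite Cnorm_real. reflexivity.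
  - intros k Hk. split; auto.
  - exists delta. split; auto. intros x Hx. apply (H x Hx).
Qed.

Theorem proposition9 :
  (* Case K = R *)
  (forall (n : nat) (a : R) (A : nat -> R -> R -> R) (D : nat -> R -> R)
          (L : nat -> R),
     (2 <= n)%nat -> 0 < a ->
     derivs_on a D ->
     (forall x, -a < x < a -> x <> 0 ->
        D n x + Rsum_lt (fun k => A k x (D 0%nat x) * D k x) n = 0) ->
     (forall k, (k < n)%nat -> exists M d, 0 < d /\
        forall x, x <> 0 -> Rabs x < d ->
          Rabs (A k x (D 0%nat x)) <= M / (Rabs x) ^ (n - k)) ->
     (forall k, (k < n)%nat ->
        is_limsup0 (fun x => Rabs x ^ (n - k) * Rabs (A k x (D 0%nat x))) (L k)) ->
     (forall k : nat, INR k <= Bn n * maxlist L n + INR n - 1 -> D k 0 = 0) ->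
     exists delta, 0 < delta < a /\
       forall x, -delta <= x <= delta -> D 0%nat x = 0)
  /\
  (* Case K = C: f = Du 0 + i Dv 0 *)
  (forall (n : nat) (a : R) (A : nat -> R -> CC -> CC)
          (Du Dv : nat -> R -> R) (L : nat -> R),
     (2 <= n)%nat -> 0 < a ->
     derivs_on a Du -> derivs_on a Dv ->
     (forall x, -a < x < a -> x <> 0 ->
        Cadd (Du n x, Dv n x)
             (Csum_lt (fun k => Cmul (A k x (Du 0%nat x, Dv 0%nat x)) (Du k x, Dv k x)) n)
        = C0) ->
     (forall k, (k < n)%nat -> exists M d, 0 < d /\
        forall x, x <> 0 -> Rabs x < d ->
          Cnorm (A k x (Du 0%nat x, Dv 0%nat x)) <= M / (Rabs x) ^ (n - k)) ->
     (forall k, (k < n)%nat ->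
        is_limsup0 (fun x => Rabs x ^ (n - k) * Cnorm (A k x (Du 0%nat x, Dv 0%nat x))) (L k)) ->
     (forall k : nat, INR k <= Bn n * maxlist L n + INR n - 1 ->
        Du k 0 = 0 /\ Dv k 0 = 0) ->
     exists delta, 0 < delta < a /\
       forall x, -delta <= x <= delta -> Du 0%nat x = 0 /\ Dv 0%nat x = 0).
Proof. split. exact real_case. exact complex_case. Qed.
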